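(* Let $\mathcal{X}\subseteq\mathbb{R}^n$ be compact and convex. The following are equivalent: (i) $\mathcal{X}$ is standard comonotone; (ii) for all $v\in\mathbb{R}^n$ and all $i,j\in[n]$ with $v_i=v_j$, there exists $x^*\in\arg\max\{v^\top x: x\in\mathcal{X}\}$ with $x^*_i=x^*_j$; (iii) for all $v\in\mathbb{R}^n$, there exists $x^*\in\arg\max\{v^\top x: x\in\mathcal{X}\}$ such that for all $i,j\in[n]$, $v_i=v_j$ implies $x^*_i=x^*_j$.
   Context: $\Pi_n$ is the set of permutations of $[n]$; for $\pi\in\Pi_n$, $\mathcal{Z}(\pi)=\{x\in\mathbb{R}^n: x_{\pi(1)}\ge\cdots\ge x_{\pi(n)}\}$. A set $\mathcal{X}\subseteq\mathbb{R}^n$ is standard comonotone if for every $\pi\in\Pi_n$ and every $v\in\mathcal{Z}(\pi)$, whenever $\max_{x\in\mathcal{X}}v^\top x$ attains its optimum, it has an optimal solution in $\mathcal{Z}(\pi)$. *)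

(* Defs.v *)
From HB Require Import structures.
From mathcomp Require Import all_boot all_order all_algebra all_fingroup.
From mathcomp Require Import all_classical all_reals all_analysis.
Set Implicit Arguments. Unset Strict Implicit. Unset Printing Implicit Defensive.
Import Order.TTheory GRing.Theory Num.Theory.
Import numFieldTopology.Exports numFieldNormedType.Exports.
Local Open Scope ring_scope.
Local Open Scope classical_set_scope.

Definition dotv (R : realType) (n : nat) (v x : 'rV[R]_n) : R :=
  \sum_(i < n) v ord0 i * x ord0 i.

Definition is_argmax (R : realType) (n : nat) (X : set 'rV[R]_n) (v x : 'rV[R]_n) : Prop :=
  X x /\ forall y, X y -> dotv v y <= dotv v x.

Definition Zcone (R : realType) (n : nat) (pi : 'S_n) : set 'rV[R]_n :=
  [set x | forall i j : 'I_n, (i <= j)%N -> x ord0 (pi j) <= x ord0 (pi i)].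

Definition standard_comonotone (R : realType) (n : nat) (X : set 'rV[R]_n) : Prop :=
  forall (pi : 'S_n) (v : 'rV[R]_n), Zcone pi v ->
    (exists x, is_argmax X v x) -> exists2 x, is_argmax X v x & Zcone pi x.

(* Main.v *)
Require Import Defs.
From HB Require Import structures.
From mathcomp Require Import all_boot all_order all_algebra all_fingroup.
From mathcomp Require Import all_classical all_reals all_analysis.
From mathcomp Require Import ring lra.
Import Order.TTheory GRing.Theory Num.Theory.
Import numFieldTopology.Exports numFieldNormedType.Exports.
Local Open Scope ring_scope.
Local Open Scope classical_set_scope.

Section Infra.
Variables (R : realType) (n : nat).
Implicit Types (v w x y : 'rV[R]_n).

Lemma dotvDl v w x : dotv (v + w) x = dotv v x + dotv w x.
Proof. by rewrite /dotv -big_split; apply: eq_bigr => i _; rewrite mxE mulrDl. Qed.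
Lemma dotvDr v w x : dotv x (v + w) = dotv x v + dotv x w.
Proof. by rewrite /dotv -big_split; apply: eq_bigr => i _; rewrite mxE mulrDr. Qed.
Lemma dotvZl (a : R) v x : dotv (a *: v) x = a * dotv v x.
Proof. by rewrite /dotv mulr_sumr; apply: eq_bigr => i _; rewrite mxE mulrA. Qed.
Lemma dotvZr (a : R) v x : dotv x (a *: v) = a * dotv x v.
Proof. by rewrite /dotv mulr_sumr; apply: eq_bigr => i _; rewrite mxE mulrCA. Qed.
Lemma dotvNl v x : dotv (- v) x = - dotv v x.
Proof. by rewrite -scaleN1r dotvZl mulN1r. Qed.
Lemma dotv_delta (a : 'I_n) x : dotv (delta_mx 0 a) x = x ord0 a.
Proof.
rewrite /dotv (bigD1 a) //= big1 => [|i ia]; first by rewrite !mxE !eqxx mul1r addr0.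
by rewrite !mxE eq_sym (negbTE ia) andbF mul0r.
Qed.

Lemma continuous_sum (T : topologicalType) (I : Type) (r : seq I) (F : I -> T -> R) :
  (forall i, continuous (F i)) -> continuous (fun z => \sum_(i <- r) F i z).
Proof.
move=> cF; elim: r => [|a r IH].
  have -> : (fun x : T => \sum_(i <- [::]) F i x) = (fun=> 0) by apply: funext => x; rewrite big_nil.
  by move=> x; exact: cst_continuous.
have -> : (fun x : T => \sum_(i <- a :: r) F i x) = (F a + (fun z => \sum_(i <- r) F i z))%R.
  by apply: funext => x; rewrite big_cons.
by move=> x; apply: continuousD; [exact: cF | exact: IH].
Qed.

Lemma continuous_dotv v : continuous (dotv v).
Proof.
have -> : dotv v = (fun x => \sum_(i <- index_enum 'I_n) (fun i x => v ord0 i * x ord0 i) i x).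
  by apply: funext => x; rewrite /dotv.
apply: continuous_sum => i x.
apply: (continuousM (s := fun=> v ord0 i) (t := fun x => x ord0 i)); first exact: cst_continuous.
exact: coord_continuous.
Qed.

Lemma EVT_max' {X : set 'rV[R]_n} {f : 'rV[R]_n -> R} :
  X !=set0 -> compact X -> continuous f -> exists2 c, X c & forall t, X t -> f t <= f c.
Proof.
move=> X0 cX cf; have [c cX' H] := compact_EVT_max X0 cX (continuous_subspaceT cf).
by exists c; [exact: set_mem | move=> t Xt; apply: H; exact: mem_set].
Qed.

Lemma EVT_min' {X : set 'rV[R]_n} {f : 'rV[R]_n -> R} :
  X !=set0 -> compact X -> continuous f -> exists2 c, X c & forall t, X t -> f c <= f t.
Proof.
move=> X0 cX cf; have [c cX' H] := compact_EVT_min X0 cX (continuous_subspaceT cf).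
by exists c; [exact: set_mem | move=> t Xt; apply: H; exact: mem_set].
Qed.

Lemma argmax_exists (X : set 'rV[R]_n) v : X !=set0 -> compact X -> exists x, is_argmax X v x.
Proof.
move=> X0 cX; have [c Xc H] := EVT_max' X0 cX (continuous_dotv v).
by exists c; split.
Qed.

Lemma closed_ge_f (f : 'rV[R]_n -> R) (c : R) : continuous f -> closed [set x | c <= f x].
Proof.
move=> cf; have -> : [set x | c <= f x] = f @^-1` [set y | c <= y] by [].
apply: preimage_closed; last exact: closed_ge.
by move=> x _; exact: cf.
Qed.

Lemma conv_mem (X : set 'rV[R]_n) (t : R) x y : convex_set X -> 0 <= t -> t <= 1 ->
  X x -> X y -> X (t *: x + (1 - t) *: y).
Proof.
move=> cvX t0 t1 Xx Xy.
have := cvX x y (Itv01 t0 t1) (mem_set Xx) (mem_set Xy).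
by move/set_mem.
Qed.

End Infra.
Arguments EVT_max' {R n X f}.
Arguments EVT_min' {R n X f}.
Arguments argmax_exists {R n X}.
Arguments continuous_dotv {R n}.
Arguments closed_ge_f {R n f}.
Arguments conv_mem {R n X t x y}.

Lemma sort_perm n (le : rel 'I_n) : total le -> transitive le ->
  exists pi : 'S_n, forall k l : 'I_n, (k <= l)%N -> le (pi k) (pi l).
Proof.
move=> tot tr.
pose s := sort le (enum 'I_n).
have ss : size s = n by rewrite size_sort size_enum_ord.
have us : uniq s by rewrite sort_uniq enum_uniq.
pose f (k : 'I_n) := nth k s k.
have finj : injective f.
  move=> k l; rewrite /f (set_nth_default k l); last by rewrite ss ltn_ord.
  move=> /eqP; rewrite nth_uniq ?ss ?ltn_ord // => /eqP; exact: val_inj.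
exists (perm finj) => k l kl; rewrite !permE /f.
rewrite (set_nth_default k l); last by rewrite ss ltn_ord.
have refl : reflexive le by move=> x; have := tot x x; rewrite orbb.
apply: (sorted_leq_nth tr refl) => //; first exact: sort_sorted.
- by rewrite inE ss ltn_ord.
- by rewrite inE ss ltn_ord.
Qed.

Section Main.
Variables (R : realType) (n : nat) (X : set 'rV[R]_n).
Hypotheses (X0 : X !=set0) (cX : compact X) (cvX : convex_set X).

Definition condii := forall (v : 'rV[R]_n) (i j : 'I_n), v ord0 i = v ord0 j ->
      exists2 x, is_argmax X v x & x ord0 i = x ord0 j.
Definition condiii := forall v : 'rV[R]_n, exists2 x, is_argmax X v x &
      forall i j : 'I_n, v ord0 i = v ord0 j -> x ord0 i = x ord0 j.

Lemma ii_strict : condii -> forall (w x : 'rV[R]_n) (a b : 'I_n),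
  is_argmax X w x -> w ord0 b < w ord0 a -> x ord0 b <= x ord0 a.
Proof.
move=> H2 w x a b [Xx xmax] ba.
have ab : a != b by apply/eqP => eab; move: ba; rewrite eab ltxx.
pose s := (w ord0 a - w ord0 b) / 2.
pose w' := w - s *: (delta_mx 0 a - delta_mx 0 b).
have dw z : dotv w' z = dotv w z - s * (z ord0 a - z ord0 b).
  by rewrite /w' dotvDl dotvNl dotvZl dotvDl dotvNl !dotv_delta.
have w'ab : w' ord0 a = w' ord0 b.
  rewrite /w' !mxE !eqxx (negbTE ab) eq_sym (negbTE ab) /= /s. lra.
have [y [Xy ymax] yab] := H2 w' a b w'ab.
have h1 := xmax y Xy.
have h2 := ymax x Xx.
rewrite !dw yab subrr mulr0 subr0 in h2.
have s0 : 0 < s by rewrite /s; lra.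
have : 0 <= s * (x ord0 a - x ord0 b) by lra.
rewrite pmulr_rge0 // subr_ge0 //.
Qed.


Lemma closed_Zcone (pi : 'S_n) : closed (Zcone pi : set 'rV[R]_n).
Proof.
have -> : (Zcone pi : set 'rV[R]_n) = \bigcap_(p in [set p : 'I_n * 'I_n | (p.1 <= p.2)%N])
    [set x : 'rV[R]_n | 0 <= x ord0 (pi p.1) - x ord0 (pi p.2)].
  apply/seteqP; split => x /= H.
    by move=> [i j] /= ij; rewrite subr_ge0; exact: H.
  by move=> i j ij; have := H (i, j) ij; rewrite /= subr_ge0.
apply: closed_bigI => p _; apply: closed_ge_f => x.
by apply: continuousB; exact: coord_continuous.
Qed.

Lemma ii_i : condii -> standard_comonotone X.
Proof.
move=> H2 pi v vZ _.
pose r : 'rV[R]_n := \row_k (- (((pi^-1)%g k : nat)%:R)).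
have key eps : 0 < eps -> forall x, is_argmax X (v + eps *: r) x -> Zcone pi x.
  move=> e0 x xa i j ij.
  have [eij|nij] := eqVneq i j; first by rewrite eij.
  have ltij : (i < j)%N by rewrite ltn_neqAle ij andbT; apply: contra nij => /eqP /val_inj ->.
  apply: (ii_strict H2 _ _ _ _ xa).
  rewrite !mxE !permK.
  have h1 := vZ i j ij.
  have h2 : eps * (i : nat)%:R < eps * (j : nat)%:R by rewrite ltr_pM2l // ltr_nat.
  lra.
pose M := X `&` Zcone pi.
have [x1 x1a] := argmax_exists (v + 1 *: r) X0 cX.
have M0 : M !=set0 by exists x1; split; [case: x1a | exact: (key 1 ltr01)].
have cM : compact M by apply: compact_closedI => //; exact: closed_Zcone.
have [z [Xz Zz] zmax] := EVT_max' M0 cM (continuous_dotv v).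
have [c1 Xc1 c1max] := EVT_max' X0 cX (continuous_dotv r).
have [c0 Xc0 c0min] := EVT_min' X0 cX (continuous_dotv r).
exists z => //; split => // y Xy.
rewrite leNgt; apply/negP => lt.
pose D := dotv v y - dotv v z.
pose K := dotv r c1 - dotv r c0.
have D0 : 0 < D by rewrite /D subr_gt0.
have K0 : 0 <= K by rewrite /K subr_ge0; exact: c0min.
pose eps := D / (2 * (K + 1)).
have e0 : 0 < eps by rewrite /eps divr_gt0 //; lra.
have [xe [Xxe xemax]] := argmax_exists (v + eps *: r) X0 cX.
have xeM : M xe by split => //; apply: (key eps e0); split.
have h1 := zmax xe xeM.
have h2 := xemax y Xy.
rewrite !dotvDl !dotvZl in h2.
have h3 := c1max xe Xxe.
have h4 := c0min y Xy.
have h5 : eps * (dotv r xe - dotv r y) <= eps * K.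
  by rewrite ler_pM2l //; rewrite /K; lra.
have h6 : eps * K < D.
  rewrite /eps mulrAC ltr_pdivrMr; last lra.
  by rewrite ltr_pM2l //; lra.
rewrite /D in D0 h6; lra.
Qed.


Lemma i_iii : standard_comonotone X -> condiii.
Proof.
move=> H1 v.
have [x0 [Xx0 x0max]] := argmax_exists v X0 cX.
pose c := dotv v x0.
pose F := X `&` [set y | c <= dotv v y].
have F0 : F !=set0 by exists x0; split => //=; exact: lexx.
have cF : compact F by apply: compact_closedI => //; exact: (closed_ge_f c (continuous_dotv v)).
pose tie (p : 'I_n * 'I_n) : R := (v ord0 p.1 == v ord0 p.2)%:R.
pose phi (x : 'rV[R]_n) := \sum_(p <- index_enum (('I_n * 'I_n)%type))
   (fun p (x : 'rV[R]_n) => tie p * ((x ord0 p.1 - x ord0 p.2) * (x ord0 p.1 - x ord0 p.2))) p x.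
have cphi : continuous phi.
  apply: continuous_sum => p x.
  apply: (continuousM (s := fun=> tie p) (t := fun x : 'rV[R]_n => (x ord0 p.1 - x ord0 p.2) * (x ord0 p.1 - x ord0 p.2))); first exact: cst_continuous.
  by apply: (continuousM (s := fun x : 'rV[R]_n => (x ord0 p.1 - x ord0 p.2)) (t := fun x : 'rV[R]_n => (x ord0 p.1 - x ord0 p.2)));
    apply: (continuousB (f := fun x : 'rV[R]_n => x ord0 p.1) (g := fun x : 'rV[R]_n => x ord0 p.2)); exact: coord_continuous.
have [xs [Xxs cxs] xsmin] := EVT_min' F0 cF cphi.
have xsa : is_argmax X v xs.
  by split => // y Xy; apply: le_trans (x0max y Xy) cxs.
pose le := fun a b : 'I_n => (v ord0 b < v ord0 a) || ((v ord0 a == v ord0 b) && (xs ord0 a <= xs ord0 b)).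
have tot : total le.
  move=> a b; rewrite /le; case: (ltgtP (v ord0 a) (v ord0 b)) => //= _.
  exact: le_total.
have tr : transitive le.
  move=> b a d; rewrite /le => /orP[h1|/andP[/eqP e1 h1]] /orP[h2|/andP[/eqP e2 h2]]; apply/orP.
  - by left; exact: lt_trans h2 h1.
  - by left; rewrite -e2.
  - by left; rewrite e1.
  - by right; rewrite e1 e2 eqxx (le_trans h1 h2).
have [pi piS] := @sort_perm n le tot tr.
have vZ : Zcone pi v.
  move=> k l kl; move: (piS k l kl); rewrite /le => /orP [/ltW //|/andP [/eqP -> _]].
  exact: lexx.
have [y [Xy ymax] yZ] := H1 pi v vZ (ex_intro _ xs xsa).
pose a p := xs ord0 p.1 - xs ord0 p.2.
pose b p := y ord0 p.1 - y ord0 p.2.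
have ab p : tie p != 0 -> a p * b p <= 0.
  rewrite /tie pnatr_eq0 eqb0 negbK => /eqP tp.
  case: p tp => i j /= tp; rewrite /a /b /=.
  have [kl|lk] := leqP ((pi^-1)%g i) ((pi^-1)%g j).
    have := piS _ _ kl; rewrite !permKV /le tp ltxx eqxx /= => hx.
    have := yZ _ _ kl; rewrite !permKV => hy.
    by apply: mulr_le0_ge0; rewrite ?subr_le0 ?subr_ge0.
  have kl := ltnW lk.
  have := piS _ _ kl; rewrite !permKV /le tp ltxx eqxx /= => hx.
  have := yZ _ _ kl; rewrite !permKV => hy.
  by apply: mulr_ge0_le0; rewrite ?subr_le0 ?subr_ge0.
have tie01 p : tie p = 0 \/ tie p = 1.
  by rewrite /tie; case: (_ == _); [right|left].
have tie1 p : v ord0 p.1 = v ord0 p.2 -> tie p = 1 by rewrite /tie => ->; rewrite eqxx.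
clearbody tie.
pose S := phi xs.
pose Q := \sum_(p <- index_enum (('I_n * 'I_n)%type)) tie p * ((b p - a p) * (b p - a p)).
have S0 : 0 <= S.
  apply: sumr_ge0 => p _; apply: mulr_ge0; first by case: (tie01 p) => ->.
  by rewrite -expr2 sqr_ge0.
have Q0 : 0 <= Q.
  apply: sumr_ge0 => p _; apply: mulr_ge0; first by case: (tie01 p) => ->.
  by rewrite -expr2 sqr_ge0.
have step t : 0 <= t -> t <= 1 -> 2 * t * S <= t ^+ 2 * Q.
  move=> t0 t1.
  have pw (T A B : R) : (T = 0 \/ T = 1) -> (T != 0 -> A * B <= 0) ->
      T * ((A + t * (B - A)) * (A + t * (B - A))) <=
      (1 - 2 * t) * (T * (A * A)) + t ^+ 2 * (T * ((B - A) * (B - A))).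
    case=> ->; first by rewrite !mul0r !mulr0 addr0.
    rewrite oner_eq0 => /(_ isT) hab; rewrite !mul1r.
    have : 0 <= t * (- (A * B)) by apply: mulr_ge0 => //; lra.
    move=> h; rewrite -subr_ge0.
    have -> : (1 - 2 * t) * (A * A) + t ^+ 2 * ((B - A) * (B - A)) -
       (A + t * (B - A)) * (A + t * (B - A)) = 2 * (t * (- (A * B))) by ring.
    by apply: mulr_ge0.
  pose z := t *: y + (1 - t) *: xs.
  have Fz : F z.
    split; first exact: conv_mem.
    rewrite /= dotvDr !dotvZr.
    have h1 := ymax xs Xxs.
    have h2 : c <= dotv v y by apply: le_trans cxs h1.
    have : t * c + (1 - t) * c <= t * dotv v y + (1 - t) * dotv v xs.
      by apply: lerD; apply: ler_wpM2l => //; lra.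
    by rewrite -mulrDl addrC subrK mul1r.
  have hz := xsmin z Fz.
  have zdiff p : z ord0 p.1 - z ord0 p.2 = a p + t * (b p - a p).
    by rewrite /z !mxE /a /b; ring.
  have : phi z <= \sum_(p <- index_enum (('I_n * 'I_n)%type))
      ((1 - 2 * t) * (tie p * (a p * a p)) + t ^+ 2 * (tie p * ((b p - a p) * (b p - a p)))).
    apply: ler_sum => p _; rewrite zdiff.
    apply: pw; [exact: tie01 | exact: ab].
  rewrite big_split /= -!mulr_sumr => hle.
  have := le_trans hz hle; rewrite -/Q.
  have -> : \sum_(p <- index_enum (('I_n * 'I_n)%type)) tie p * (a p * a p) = S by [].
  move=> h; have e : (1 - 2 * t) * S = S - 2 * t * S by ring.
  rewrite e in h; have h' : S <= S - 2 * t * S + t ^+ 2 * Q := h; lra.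
have S00 : S = 0.
  apply/eqP; rewrite eq_le S0 andbT; rewrite leNgt; apply/negP => Sp.
  pose t := S / (S + Q).
  have SQ : 0 < S + Q by lra.
  have t0 : 0 < t by rewrite /t divr_gt0.
  have t1 : t <= 1 by rewrite /t ler_pdivrMr // mul1r; lra.
  have := step t (ltW t0) t1.
  have tQ : t * Q <= S.
    rewrite /t mulrAC ler_pdivrMr //; nra.
  move=> h.
  have e1 : 2 * t * S = t * (2 * S) by ring.
  have e2 : t ^+ 2 * Q = t * (t * Q) by rewrite expr2 mulrA.
  rewrite e1 e2 ler_pM2l // in h.
  lra.
exists xs => // i j vij.
have nn : forall p : ('I_n * 'I_n)%type, predT p ->
    0 <= tie p * ((xs ord0 p.1 - xs ord0 p.2) * (xs ord0 p.1 - xs ord0 p.2)).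
  move=> p _; apply: mulr_ge0; first by case: (tie01 p) => ->.
  by rewrite -expr2 sqr_ge0.
have := @psumr_eq0P _ (('I_n * 'I_n)%type) predT
   (fun p => tie p * ((xs ord0 p.1 - xs ord0 p.2) * (xs ord0 p.1 - xs ord0 p.2))) nn S00 (i, j) isT.
have tij : tie (i, j) = 1 by exact: tie1.
rewrite /= tij mul1r => /eqP; rewrite mulf_eq0 orbb subr_eq0 => /eqP //.
Qed.

End Main.

Theorem theorem3 (R : realType) (n : nat) (X : set 'rV[R]_n) :
  X !=set0 -> compact X -> convex_set X ->
  (standard_comonotone X <->
   (forall (v : 'rV[R]_n) (i j : 'I_n), v ord0 i = v ord0 j ->
      exists2 x, is_argmax X v x & x ord0 i = x ord0 j)) /\
  (standard_comonotone X <->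
   (forall v : 'rV[R]_n, exists2 x, is_argmax X v x &
      forall i j : 'I_n, v ord0 i = v ord0 j -> x ord0 i = x ord0 j)).
Proof.
move=> X0 cX cvX.
have iii_ii : @condiii R n X -> @condii R n X.
  by move=> H v i j vij; have [x xa xt] := H v; exists x => //; exact: xt.
split; split.
- by move=> H; apply: iii_ii; exact: (@i_iii R n X X0 cX cvX H).
- exact: (@ii_i R n X X0 cX).
- exact: (@i_iii R n X X0 cX cvX).
- by move=> H; apply: (@ii_i R n X X0 cX); exact: iii_ii.
Qed.
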